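(* Let $D$ be a Newton diagram in $2$ variables whose support is exactly $K=\{(a,b)\in\mathbb N_0^2: a+b<d\}$ for some integer $d\ge1$. Then $\#(D)\ge\frac{d+5}{2}$.
   Context: For $m\in\mathbb Z^n$ write $|m|=m_1+\dots+m_n$; $e_1,\dots,e_n$ is the standard basis. A Newton diagram in $n$ variables is a function $D\colon\mathbb Z^n\to\{0,P,N\}$ ($P,N$ formal symbols) whose support $K=D^{-1}(\{P,N\})$ is a finite nonempty subset of $\mathbb N_0^n$. For $a\in\mathbb Z^n$ let $E(a)=\{a,a-e_1,\dots,a-e_n\}$; $E(a)$ is a node of $D$ if the image $D(E(a))$ equals $\{P\}$, $\{N\}$, $\{0,P\}$ or $\{0,N\}$. $\#(D)$ is the number of $a\in\mathbb Z^n$ for which $E(a)$ is a node. *)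

(* Defs.v *)
From HB Require Import structures.
From mathcomp Require Import all_boot all_order all_algebra.
Set Implicit Arguments. Unset Strict Implicit. Unset Printing Implicit Defensive.
Import Order.TTheory GRing.Theory Num.Theory.

(* The values of a Newton diagram: 0, P, N. *)
Inductive sign := S0 | SP | SN.

Definition sign_to_ord (s : sign) : 'I_3 :=
  match s with S0 => inord 0 | SP => inord 1 | SN => inord 2 end.
Definition ord_to_sign (i : 'I_3) : sign :=
  match val i with 0 => S0 | 1 => SP | _ => SN end.
Lemma sign_to_ordK : cancel sign_to_ord ord_to_sign.
Proof. by case; rewrite /ord_to_sign /= inordK. Qed.
HB.instance Definition _ := Finite.copy sign (can_type sign_to_ordK).

Definition pt := (int * int)%type.

Definition support2 (D : pt -> sign) (x : pt) : Prop := D x <> S0.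

Definition triangle (d : nat) (x : pt) : Prop :=
  (0 <= x.1)%R /\ (0 <= x.2)%R /\ (x.1 + x.2 < d%:Z)%R.

Definition imageE (D : pt -> sign) (a : pt) : {set sign} :=
  [set D a; D (a.1 - 1, a.2)%R; D (a.1, a.2 - 1)%R].

Definition is_node (D : pt -> sign) (a : pt) : bool :=
  imageE D a \in [:: [set SP]; [set SN]; [set S0; SP]; [set S0; SN]].

(* n = #(D): s is a duplicate-free enumeration of the nodes of D. *)
Definition enumerates_nodes (D : pt -> sign) (s : seq pt) : Prop :=
  uniq s /\ forall a : pt, is_node D a <-> a \in s.

(* Main.v *)
Require Import Defs.
From HB Require Import structures.
From mathcomp Require Import all_boot all_order all_algebra.
From Stdlib Require Import Lia.
Definition seqb (x y : sign) : bool :=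
  match x, y with S0, S0 | SP, SP | SN, SN => true | _, _ => false end.
Lemma seqE x y : (x == y) = seqb x y.
Proof. apply/eqP/idP => [->|]; first by case: y. by case: x; case: y. Qed.
Definition nzs (x : sign) : nat := x != S0.
Definition ed (x y : sign) : nat := [&& x != S0, y != S0 & x != y].
Definition nd (x y z : sign) : bool := [set x; y; z] \in [:: [set SP]; [set SN]; [set S0; SP]; [set S0; SN]].
Ltac seteq := apply/eqP/setP; case; rewrite !inE !seqE.
Lemma local3 x y z : nzs x + nzs y + nzs z + 2 * (nzs x + nzs y + nzs z == 1) <= 1 + (ed x y + ed x z + ed y z) + 2 * nd x y z.
Proof.
case: x; case: y; case: z; rewrite /nzs /ed !seqE /=; try by [];
match goal with |- context [nd ?a ?b ?c] => suff -> : nd a b c = true by [] end;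
rewrite /nd !in_cons; apply/orP;
first [ left; by seteq | right; apply/orP;
first [ left; by seteq | right; apply/orP;
first [ left; by seteq | right; apply/orP; left; by seteq]]].
Qed.
Lemma down3 x y z : ed x y + ed x z + ed y z <= 2.
Proof. case: x; case: y; case: z; by rewrite /ed !seqE. Qed.
Lemma edC x y : ed x y = ed y x.
Proof. by case: x; case: y; rewrite /ed !seqE. Qed.
Lemma ed0r x : ed x S0 = 0. Proof. by case: x; rewrite /ed !seqE. Qed.
Lemma ed0l x : ed S0 x = 0. Proof. by case: x; rewrite /ed !seqE. Qed.
Lemma int1 (i : nat) : (Posz i.+1 - 1 = Posz i)%R.
Proof. by rewrite -addn1 PoszD GRing.addrK. Qed.

Lemma shift (n : nat) (F G : nat -> nat) : F 0 = 0 -> (forall i, F i.+1 = G i) -> G n = 0 ->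
  \sum_(0 <= i < n.+1) F i = \sum_(0 <= i < n.+1) G i.
Proof.
move=> F0 FS Gn; rewrite big_nat_recl // big_nat_recr //= F0 Gn addn0 add0n.
by apply: eq_bigr => i _; exact: FS.
Qed.

Lemma sum_lt n k : \sum_(0 <= j < n) (j < k : nat) = minn k n.
Proof.
elim: n => [|n IH]; first by rewrite big_geq // minn0.
rewrite big_nat_recr //= IH; case: (ltnP n k) => h.
  by rewrite (minn_idPr h) addn1.
by rewrite (minn_idPl (leqW h)) addn0.
Qed.

Lemma sum_eq n k : \sum_(0 <= j < n) (j == k : nat) = (k < n).
Proof.
elim: n => [|n IH]; first by rewrite big_geq.
rewrite big_nat_recr //= IH [k < n.+1]ltnS [k <= n]leq_eqVlt eq_sym.
by case: (ltngtP k n).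
Qed.

Definition SS (n : nat) (F : nat -> nat -> nat) := \sum_(0 <= i < n) \sum_(0 <= j < n) F i j.

Lemma SS_add n F G : SS n (fun i j => F i j + G i j) = SS n F + SS n G.
Proof. rewrite /SS -big_split /=; apply: eq_bigr => i _; exact: big_split. Qed.

Lemma SS_le n F G : (forall i j, F i j <= G i j) -> SS n F <= SS n G.
Proof. move=> h; apply: leq_sum => i _; apply: leq_sum => j _; exact: h. Qed.

Lemma SS_delta n a b : SS n (fun i j => (i == a) * (j == b)) = (a < n) * (b < n).
Proof.
by rewrite /SS -(sum_eq n a) -(sum_eq n b) big_distrlr.
Qed.

Lemma SS_mul2 n F : SS n (fun i j => 2 * F i j) = 2 * SS n F.
Proof. rewrite /SS big_distrr /=; apply: eq_bigr => i _; by rewrite big_distrr. Qed.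

Lemma tS d m : m <= d -> SS d.+1 (fun i j => i + j < m.+1) = SS d.+1 (fun i j => i + j < m) + m.+1.
Proof.
move=> md; rewrite /SS big_nat_recl // [in RHS]big_nat_recr //=.
rewrite (_ : \sum_(0 <= j < d.+1) (d + j < m : nat) = 0); last first.
  rewrite big1 // => j _; rewrite ltnNge (leq_trans md) //; exact: leq_addr.
rewrite addn0 addnC; congr (_ + _).
by rewrite (eq_bigr (fun j => (j < m.+1 : nat))) // sum_lt; apply/minn_idPl.
Qed.

Lemma count_sum (T : Type) (P : pred T) (l : seq T) : \sum_(p <- l) (P p : nat) = count P l.
Proof. by elim: l => [|x l IH]; rewrite ?big_nil ?big_cons //= IH. Qed.

Theorem mainTheorem7 (d : nat) (D : pt -> sign) :
  (1 <= d)%N ->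
  (forall x : pt, support2 D x <-> triangle d x) ->
  forall s : seq pt, enumerates_nodes D s ->
  (d + 5 <= 2 * size s)%N.
Proof.
move=> d1 H s [us Hs].
case: d d1 H => [//|e] _ H.
have Dz : forall x, ~ triangle e.+1 x -> D x = S0.
  move=> x nt; case E: (D x == S0); first exact/eqP.
  exfalso; apply: nt; apply/H => E'; by rewrite E' eqxx in E.
pose f i j := D (Posz i, Posz j).
pose u i j := D (Posz i - 1, Posz j)%R.
pose v i j := D (Posz i, Posz j - 1)%R.
have nzf : forall i j, (f i j != S0) = (i + j < e.+1).
  move=> i j; apply/idP/idP => h.
  - have [_ [_ h2]] : triangle e.+1 (Posz i, Posz j).
      by apply/H => E; rewrite /f E eqxx in h.
    by rewrite /= -PoszD ltz_nat in h2.
  - apply/eqP; apply/H; split; first by [].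
    by split; [| rewrite /= -PoszD ltz_nat].
have f0 : forall i j, e.+1 <= i + j -> f i j = S0.
  by move=> i j h; apply/eqP; rewrite -[_ == _]negbK nzf -leqNgt h.
have u0 : forall j, u 0 j = S0 by move=> j; apply: Dz; case.
have v0 : forall i, v i 0 = S0 by move=> i; apply: Dz => [[_ [h _]]].
have uS : forall i j, u i.+1 j = f i j by move=> i j; rewrite /u int1.
have vS : forall i j, v i j.+1 = f i j by move=> i j; rewrite /v int1.
have pti : forall i j,
  nzs (f i j) + nzs (u i j) + nzs (v i j) +
  2 * ((i == 0) * (j == 0) + (i == e.+1) * (j == 0) + (i == 0) * (j == e.+1))
  <= (i + j < e.+2) + (ed (f i j) (u i j) + ed (f i j) (v i j) + ed (u i j) (v i j))
     + 2 * is_node D (Posz i, Posz j).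
  move=> i j; case: (ltnP (i + j) e.+2) => hij.
  - have L := local3 (f i j) (u i j) (v i j).
    have C : (i == 0) * (j == 0) + (i == e.+1) * (j == 0) + (i == 0) * (j == e.+1)
        <= (nzs (f i j) + nzs (u i j) + nzs (v i j) == 1).
      case: i hij L => [|i] hij L; case: j hij L => [|j] hij L;
        rewrite /nzs ?u0 ?v0 ?uS ?vS ?nzf ?eqxx /=.
      all: rewrite ?eqSS ?mul1n ?mul0n ?muln1 ?muln0 ?addn0 ?add0n //.
      + by case: (@eqP _ j e) => [->|]; rewrite ?ltnn ?ltnSn.
      + by case: (@eqP _ i e) => [->|]; rewrite ?ltnn ?ltnSn.
    apply: leq_trans (leq_trans L _).
      by rewrite leq_add2l leq_mul2l C orbT.
    exact: leqnn.
  - have hf : f i j = S0 by apply: f0; exact: ltnW.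
    have hu : u i j = S0.
      case: i hij {hf} => [|i] hij; first exact: u0.
      by rewrite uS; apply: f0; rewrite -ltnS -addSn.
    have hv : v i j = S0.
      case: j hij {hf hu} => [|j] hij; first exact: v0.
      by rewrite vS; apply: f0; rewrite -ltnS -addnS.
    have c0 : (i == 0) * (j == 0) + (i == e.+1) * (j == 0) + (i == 0) * (j == e.+1) = 0.
      case: i hij {hf hu hv} => [|i] hij; case: j hij => [|j] hij //=;
        rewrite ?add0n ?addn0 in hij; rewrite ?(gtn_eqF hij) ?mul0n ?muln0 //.
    by rewrite hf hu hv c0 /nzs eqxx.
have Hsum := @SS_le e.+2 _ _ pti.
rewrite [X in X <= _]SS_add [X in _ <= X]SS_add !SS_mul2 !SS_add !SS_delta /= in Hsum.
pose t m := SS e.+2 (fun i j => i + j < m).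
have E1 : SS e.+2 (fun i j => nzs (f i j)) = t e.+1.
  by apply: eq_bigr => i _; apply: eq_bigr => j _; rewrite /nzs nzf.
have E2 : SS e.+2 (fun i j => nzs (u i j)) = t e.+1.
  rewrite -E1 /SS (@shift e.+1 _ (fun i => \sum_(0 <= j < e.+2) nzs (f i j))) //.
  - by rewrite big1 // => j _; rewrite u0 /nzs eqxx.
  - by move=> i; apply: eq_bigr => j _; rewrite uS.
  - by rewrite big1 // => j _; rewrite /nzs nzf ltnNge leq_addr.
have E3 : SS e.+2 (fun i j => nzs (v i j)) = t e.+1.
  rewrite -E1 /SS; apply: eq_bigr => i _.
  rewrite (@shift e.+1 _ (fun j => nzs (f i j))) //.
  - by rewrite v0 /nzs eqxx.
  - by move=> j; rewrite vS.
  - by rewrite /nzs nzf ltnNge leq_addl.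
have C1 : SS e.+2 (fun i j => ed (f i j) (u i j)) = SS e.+2 (fun i j => ed (f i.+1 j) (f i j)).
  rewrite /SS (@shift e.+1 _ (fun i => \sum_(0 <= j < e.+2) ed (f i.+1 j) (f i j))) //.
  - by rewrite big1 // => j _; rewrite u0 ed0r.
  - by move=> i; apply: eq_bigr => j _; rewrite uS.
  - by rewrite big1 // => j _; rewrite f0 ?ed0l // ltn_addr // leqW.
have C2 : SS e.+2 (fun i j => ed (f i j) (v i j)) = SS e.+2 (fun i j => ed (f i j.+1) (f i j)).
  rewrite /SS; apply: eq_bigr => i _.
  rewrite (@shift e.+1 _ (fun j => ed (f i j.+1) (f i j))) //.
  - by rewrite v0 ed0r.
  - by move=> j; rewrite vS.
  - by rewrite f0 ?ed0l // ltn_addl // leqW.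
have inner : forall i, \sum_(0 <= j < e.+2) ed (f i j) (v i.+1 j)
     = \sum_(0 <= j < e.+2) ed (f i j.+1) (f i.+1 j).
  move=> i; rewrite (@shift e.+1 _ (fun j => ed (f i j.+1) (f i.+1 j))) //.
  - by rewrite v0 ed0r.
  - by move=> j; rewrite vS.
  - by rewrite f0 ?ed0l // ltn_addl // leqW.
have C3 : SS e.+2 (fun i j => ed (u i j) (v i j)) = SS e.+2 (fun i j => ed (f i j.+1) (f i.+1 j)).
  rewrite /SS (@shift e.+1 _ (fun i => \sum_(0 <= j < e.+2) ed (f i j.+1) (f i.+1 j))) //.
  - by rewrite big1 // => j _; rewrite u0 ed0l.
  - by move=> i; rewrite -inner; apply: eq_bigr => j _; rewrite uS.
  - by rewrite big1 // => j _; rewrite f0 ?ed0l // ltn_addr.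
have Bch : SS e.+2 (fun i j => ed (f i.+1 j) (f i j)) + SS e.+2 (fun i j => ed (f i j.+1) (f i j))
    + SS e.+2 (fun i j => ed (f i j.+1) (f i.+1 j)) <= 2 * SS e.+2 (fun i j => i + j < e).
  rewrite -!SS_add -SS_mul2; apply: SS_le => i j.
  case: (ltnP (i + j) e) => h.
  - rewrite (edC (f i.+1 j)) (edC (f i j.+1) (f i j)) (edC (f i j.+1)).
    exact: down3.
  - have a1 : f i.+1 j = S0 by apply: f0; rewrite addSn ltnS.
    have a2 : f i j.+1 = S0 by apply: f0; rewrite addnS ltnS.
    by rewrite a1 a2 !ed0l.
have Bnode : SS e.+2 (fun i j => is_node D (Posz i, Posz j)) <= size s.
  rewrite /SS -(big_allpairs (F := fun p : nat * nat => (is_node D (Posz p.1, Posz p.2) : nat))).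
  rewrite (count_sum _ (fun p : nat * nat => is_node D (Posz p.1, Posz p.2))) -size_filter.
  rewrite -(size_map (fun p : nat * nat => ((Posz p.1, Posz p.2) : pt))).
  apply: uniq_leq_size.
  - rewrite map_inj_uniq; first by rewrite filter_uniq // allpairs_uniq ?iota_uniq // => [[? ?] [? ?]] _ _.
    by move=> [a b] [a' b'] [-> ->].
  - by move=> x /mapP [p]; rewrite mem_filter => /andP [hn _] ->; exact/Hs.
have T1 := tS e.+1 e.+1 (leqnn _).
have T2 := tS e.+1 e (leqnSn e).
rewrite E1 E2 E3 C1 C2 C3 ltnSn /t /= in Hsum.
move: Hsum Bch Bnode T1 T2.
set A := SS e.+2 (fun i j => i + j < e).
set B := SS e.+2 (fun i j => i + j < e.+1).
set Cc := SS e.+2 (fun i j => i + j < e.+2).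
set X1 := SS e.+2 (fun i j => ed (f i.+1 j) (f i j)).
set X2 := SS e.+2 (fun i j => ed (f i j.+1) (f i j)).
set X3 := SS e.+2 (fun i j => ed (f i j.+1) (f i.+1 j)).
set Y := SS e.+2 _.
move=> /leP h1 /leP h2 /leP h3 h4 h5.
apply/leP. rewrite ?addnE ?mulnE in h1 h2 h3 h4 h5 *. lia.
Qed.
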